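(* Let $(A_i,\omega_i)$, $i=1,2$, be commutative unital baric algebras over $K$ that are both indecomposable. Then $(A_1\bowtie A_2,\omega_1\bowtie\omega_2)$ is indecomposable.
   Context: A baric algebra over a field $K$ is a pair $(A,\omega)$ where $A$ is a (not necessarily associative) $K$-algebra and $\omega:A\to K$ is a nonzero $K$-algebra homomorphism. For baric algebras $(A_1,\omega_1),(A_2,\omega_2)$, $A_1\bowtie A_2$ denotes the vector space $A_1\oplus A_2$ with product $(a_1,a_2)(b_1,b_2)=(a_1b_1+\omega_2(b_2)a_1,\ a_2b_2+\omega_1(b_1)a_2)$, and $\omega_1\bowtie\omega_2(a_1,a_2)=\omega_1(a_1)+\omega_2(a_2)$. A baric algebra $(A,\omega)$ possessing an idempotent of weight $1$ is called decomposable if there exist nonzero two-sided ideals $N_1,N_2$ of $A$, both contained in $\operatorname{Ker}\omega$, with $\operatorname{Ker}\omega=N_1\oplus N_2$; otherwise it is indecomposable. (In a unital baric algebra the unit is an idempotent of weight 1, and $(1,0)$ is an idempotent of weight 1 in $A_1\bowtie A_2$.) *)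

(* Defs.v *)
(* A (not necessarily associative) K-algebra is represented by
   a K-vector space A : lmodType K together with a bilinear multiplication
   m : A -> A -> A.  Subspaces/ideals are predicates A -> Prop (no finite
   dimensionality is assumed). *)
From mathcomp Require Import all_boot all_order all_algebra.
Set Implicit Arguments. Unset Strict Implicit. Unset Printing Implicit Defensive.
Import GRing.Theory.
Local Open Scope ring_scope.

Section Baric.
Variables (K : fieldType) (A : lmodType K).

Definition bilinear_mul (m : A -> A -> A) : Prop :=
  (forall (a : K) (x y z : A), m (a *: x + y) z = a *: m x z + m y z) /\
  (forall (a : K) (x y z : A), m x (a *: y + z) = a *: m x y + m x z).

Definition weight_fun (m : A -> A -> A) (w : A -> K) : Prop :=
  [/\ forall (a : K) (x y : A), w (a *: x + y) = a * w x + w y,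
      forall x y : A, w (m x y) = w x * w y &
      exists x : A, w x != 0].

Definition baric (m : A -> A -> A) (w : A -> K) : Prop :=
  bilinear_mul m /\ weight_fun m w.

Definition commutative_alg (m : A -> A -> A) : Prop :=
  forall x y : A, m x y = m y x.

Definition unital_alg (m : A -> A -> A) : Prop :=
  exists e : A, forall x : A, m e x = x /\ m x e = x.

Definition two_sided_ideal (m : A -> A -> A) (N : A -> Prop) : Prop :=
  [/\ N 0,
      forall (a : K) (x y : A), N x -> N y -> N (a *: x + y),
      forall x y : A, N y -> N (m x y) &
      forall x y : A, N x -> N (m x y)].

Definition has_weight1_idempotent (m : A -> A -> A) (w : A -> K) : Prop :=
  exists e : A, m e e = e /\ w e = 1.

Definition kernel_splits (m : A -> A -> A) (w : A -> K) : Prop :=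
  exists N1 N2 : A -> Prop,
    two_sided_ideal m N1 /\ two_sided_ideal m N2 /\
    (exists x, N1 x /\ x != 0) /\ (exists x, N2 x /\ x != 0) /\
    (forall x, N1 x -> w x = 0) /\ (forall x, N2 x -> w x = 0) /\
    (forall x, w x = 0 -> exists x1 x2, N1 x1 /\ N2 x2 /\ x = x1 + x2) /\
    (forall x, N1 x -> N2 x -> x = 0).

Definition decomposable (m : A -> A -> A) (w : A -> K) : Prop :=
  has_weight1_idempotent m w /\ kernel_splits m w.

Definition indecomposable (m : A -> A -> A) (w : A -> K) : Prop :=
  has_weight1_idempotent m w /\ ~ kernel_splits m w.

End Baric.

Definition bowtie_mul (K : fieldType) (A1 A2 : lmodType K)
    (m1 : A1 -> A1 -> A1) (w1 : A1 -> K) (m2 : A2 -> A2 -> A2) (w2 : A2 -> K)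
    (x y : (A1 * A2)%type) : (A1 * A2)%type :=
  (m1 x.1 y.1 + w2 y.2 *: x.1, m2 x.2 y.2 + w1 y.1 *: x.2).

Definition bowtie_weight (K : fieldType) (A1 A2 : lmodType K)
    (w1 : A1 -> K) (w2 : A2 -> K) (x : (A1 * A2)%type) : K :=
  w1 x.1 + w2 x.2.

(* Main.v *)
Require Import Defs.
From mathcomp Require Import all_boot all_order all_algebra.
Import GRing.Theory.
Local Open Scope ring_scope.
Set Implicit Arguments. Unset Strict Implicit.

Section Lin.
Variables (K : fieldType) (A : lmodType K).

Lemma wlin0 (w : A -> K) : (forall a x y, w (a *: x + y) = a * w x + w y) -> w 0 = 0.
Proof.
move=> hw; have := hw 1 0 0; rewrite scaler0 addr0 mul1r => h.
by apply: (@addrI _ (w 0)); rewrite addr0 -h.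
Qed.

Lemma wlinN (w : A -> K) : (forall a x y, w (a *: x + y) = a * w x + w y) ->
  forall x, w (- x) = - w x.
Proof.
move=> hw x; have := hw (-1) x 0; rewrite addr0 (wlin0 hw) addr0 scaleN1r => ->.
by rewrite mulN1r.
Qed.

Lemma wlinD (w : A -> K) : (forall a x y, w (a *: x + y) = a * w x + w y) ->
  forall x y, w (x + y) = w x + w y.
Proof. by move=> hw x y; have := hw 1 x y; rewrite scale1r mul1r. Qed.

Lemma wlinZ (w : A -> K) : (forall a x y, w (a *: x + y) = a * w x + w y) ->
  forall a x, w (a *: x) = a * w x.
Proof. by move=> hw a x; have := hw a x 0; rewrite addr0 (wlin0 hw) addr0. Qed.

Lemma mlin0 (m : A -> A -> A) : (forall (a : K) (x y z : A), m (a *: x + y) z = a *: m x z + m y z) ->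
  forall z, m 0 z = 0.
Proof.
move=> hm z; have := hm 1 0 0 z; rewrite scaler0 addr0 scale1r => h.
by apply: (@addrI _ (m 0 z)); rewrite addr0 -h.
Qed.

Lemma mlinN (m : A -> A -> A) : (forall (a : K) (x y z : A), m (a *: x + y) z = a *: m x z + m y z) ->
  forall x z, m (- x) z = - m x z.
Proof.
move=> hm x z; have := hm (-1) x 0 z; rewrite addr0 (mlin0 hm) addr0 !scaleN1r.
by [].
Qed.

End Lin.

Theorem proposition5p5 (K : fieldType) (A1 A2 : lmodType K)
    (m1 : A1 -> A1 -> A1) (w1 : A1 -> K) (m2 : A2 -> A2 -> A2) (w2 : A2 -> K) :
  baric m1 w1 -> commutative_alg m1 -> unital_alg m1 -> indecomposable m1 w1 ->
  baric m2 w2 -> commutative_alg m2 -> unital_alg m2 -> indecomposable m2 w2 ->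
  indecomposable (bowtie_mul m1 w1 m2 w2) (bowtie_weight w1 w2).
Proof.
move=> [[bl1 _] [hw1 hm1 [x1 hx1]]] _ [u1 hu1] [[e1 [he1 we1]] _].
move=> [[bl2 _] [hw2 hm2 [x2 hx2]]] _ [u2 hu2] _.
have wu1 : w1 u1 = 1.
  apply: (mulIf hx1); rewrite mul1r -hm1; by case: (hu1 x1) => ->.
have wu2 : w2 u2 = 1.
  apply: (mulIf hx2); rewrite mul1r -hm2; by case: (hu2 x2) => ->.
have w10 := wlin0 hw1; have w20 := wlin0 hw2.
have w1N := wlinN hw1; have w2N := wlinN hw2.
have w1D := wlinD hw1; have w2D := wlinD hw2.
have w1Z := wlinZ hw1; have w2Z := wlinZ hw2.
have m10 := mlin0 bl1; have m20 := mlin0 bl2.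
have m1N := mlinN bl1; have m2N := mlinN bl2.
set M := bowtie_mul m1 w1 m2 w2.
split.
  exists (e1, 0); split.
    by rewrite /M /bowtie_mul /= he1 w20 scale0r addr0 m20 scaler0 addr0.
  by rewrite /bowtie_weight /= we1 w20 addr0.
set f : (A1 * A2)%type := (u1, - u2).
have Fa : forall a1 a2, M (u1, 0) (a1, a2) = (a1 + w2 a2 *: u1, 0).
  move=> a1 a2; rewrite /M /bowtie_mul /=; case: (hu1 a1) => -> _.
  by rewrite m20 scaler0 addr0.
have Fb : forall a1 a2, M (0, u2) (a1, a2) = (0, a2 + w1 a1 *: u2).
  move=> a1 a2; rewrite /M /bowtie_mul /=; case: (hu2 a2) => -> _.
  by rewrite m10 scaler0 addr0.
have Fc : forall a1 a2, M f (a1, a2) = (a1 + w2 a2 *: u1, - a2 - w1 a1 *: u2).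
  move=> a1 a2; rewrite /M /bowtie_mul /=; case: (hu1 a1) => -> _.
  by rewrite m2N; case: (hu2 a2) => -> _; rewrite scalerN.
have KL1 : forall N, two_sided_ideal M N -> forall x, N x ->
    bowtie_weight w1 w2 x = 0 -> N (w1 x.1 *: f).
  move=> N [N0 NZ NL NR] [a1 a2] Nx; rewrite /bowtie_weight /= => hW.
  have Y1 := NL (u1, 0) _ Nx; have Y2 := NL (0, u2) _ Nx.
  have := NZ (-1) _ _ Y1 (NZ (-1) _ _ Y2 Nx).
  rewrite Fa Fb; congr N.
  have e2 : w2 a2 = - w1 a1 by apply/eqP; rewrite -addr_eq0 addrC hW.
  rewrite e2 /f /=; congr pair.
    by rewrite !scaleN1r /= oppr0 add0r opprD addrAC addNr add0r scaleNr opprK.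
  by rewrite !scaleN1r /= oppr0 add0r opprD addrAC addNr add0r scalerN.
have KL2 : forall N, two_sided_ideal M N -> N f -> forall x,
    bowtie_weight w1 w2 x = 0 -> N x.
  move=> N [N0 NZ NL NR] Nf [a1 a2]; rewrite /bowtie_weight /= => hW.
  have e2 : w2 a2 = - w1 a1 by apply/eqP; rewrite -addr_eq0 addrC hW.
  have Y := NR _ (a1, a2) Nf; rewrite Fc in Y.
  have Z := NL (u1, 0) _ Y; rewrite Fa in Z.
  have := NZ 1 _ _ Z (NZ 1 _ _ Z (NZ (-1) _ _ Y (NZ (w1 a1) _ _ Nf N0))).
  congr N; rewrite /f /= w2D !w2N w2Z e2 wu2 mulr1 opprK subrr scale0r !addr0.
  rewrite [LHS]surjective_pairing /=; congr pair.
    rewrite !scale1r scaleN1r.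
    set p := a1 + _; rewrite addNKr.
    by rewrite /p scaleNr subrK.
  by rewrite !scaler0 !add0r scaleN1r opprD !opprK scalerN addrK.
move=> [N1 [N2 [I1 [I2 [[y1 [Ny1 nz1]] [[y2 [Ny2 nz2]] [K1 [K2 [Hs Hd]]]]]]]]].
have Wf : bowtie_weight w1 w2 f = 0 by rewrite /bowtie_weight /= w2N wu1 wu2 subrr.
have [n1 [n2 [Nn1 [Nn2 fe]]]] := Hs f Wf.
have Wn1 := K1 _ Nn1; have Wn2 := K2 _ Nn2.
have c12 : w1 n1.1 + w1 n2.1 = 1 by rewrite -w1D -wu1 [u1](congr1 fst fe).
have [c0 | c0] := eqVneq (w1 n1.1) 0.
  rewrite c0 add0r in c12.
  have := KL1 N2 I2 n2 Nn2 Wn2; rewrite c12 scale1r => Nf.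
  by move: nz1; rewrite (Hd y1 Ny1 (KL2 N2 I2 Nf y1 (K1 _ Ny1))) eqxx.
have := KL1 N1 I1 n1 Nn1 Wn1 => Nf.
case: I1 => N0 NZ NL NR.
have := NZ (w1 n1.1)^-1 _ _ Nf N0; rewrite addr0 scalerA mulVf // scale1r => Nf'.
by move: nz2; rewrite (Hd y2 (KL2 N1 (And4 N0 NZ NL NR) Nf' y2 (K2 _ Ny2)) Ny2) eqxx.
Qed.
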